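(* Let $A_n$ be the nilCoxeter algebra, let $\psi_n$ be the algebra involution of $A_n$ with $\psi_n(Y_i)=Y_{n-i}$, and let $A_n^{\psi}$ be the $A_n$-bimodule which is $A_n$ with left action by left multiplication and right action twisted by $\psi_n$ (i.e. $a\cdot t\cdot b=at\psi_n(b)$). Let $A_n^{\ast}=\mathrm{Hom}_{\mathbb{Q}}(A_n,\mathbb{Q})$ with the $A_n$-bimodule structure $(a f b)(y)=f(bya)$. Then $A_n^{\ast}$ and $A_n^{\psi}$ are isomorphic as $A_n$-bimodules.
   Context: $A_n$ is the unital $\mathbb{Q}$-algebra generated by $Y_1,\dots,Y_{n-1}$ with relations $Y_i^2=0$, $Y_iY_j=Y_jY_i$ for $|i-j|>1$, $Y_iY_{i+1}Y_i=Y_{i+1}Y_iY_{i+1}$. *)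

(* Defs.v *)
From HB Require Import structures.
From mathcomp Require Import all_boot all_order all_algebra.
Set Implicit Arguments. Unset Strict Implicit. Unset Printing Implicit Defensive.
Import Order.TTheory GRing.Theory Num.Theory.
Local Open Scope ring_scope.

(* Generators Y_1, ..., Y_{n-1} are encoded as Y : nat -> B; only the values
   at indices 1 <= i <= n-1 matter. *)
Definition nilCoxeter_rels (B : algType rat) (n : nat) (Y : nat -> B) : Prop :=
  [/\ (forall i, (1 <= i < n)%N -> Y i * Y i = 0),
      (forall i j, (1 <= i < n)%N -> (1 <= j < n)%N ->
         ((i.+1 < j) || (j.+1 < i))%N -> Y i * Y j = Y j * Y i)
    & (forall i, (1 <= i)%N -> (i.+1 < n)%N ->
         Y i * Y i.+1 * Y i = Y i.+1 * Y i * Y i.+1)].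

Definition is_alg_hom (A B : algType rat) (f : A -> B) : Prop :=
  [/\ (forall (c : rat) (x y : A), f (c *: x + y) = c *: f x + f y),
      f 1 = 1
    & (forall x y : A, f (x * y) = f x * f y)].

(* (A, Y) is the unital Q-algebra presented by generators Y_1..Y_{n-1} and the
   nilCoxeter relations, i.e. it satisfies the universal property of the
   presentation. *)
Definition is_nilCoxeter (A : algType rat) (n : nat) (Y : nat -> A) : Prop :=
  nilCoxeter_rels n Y /\
  forall (B : algType rat) (Z : nat -> B), nilCoxeter_rels n Z ->
    exists f : A -> B,
      [/\ is_alg_hom f,
          (forall i, (1 <= i < n)%N -> f (Y i) = Z i)
        & (forall g : A -> B, is_alg_hom g ->
             (forall i, (1 <= i < n)%N -> g (Y i) = Z i) -> g =1 f)].

Definition is_Qlinear_functional (A : algType rat) (f : A -> rat) : Prop :=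
  forall (c : rat) (x y : A), f (c *: x + y) = c * f x + f y.

(* Main.v *)
Require Import Defs.
From HB Require Import structures.
From mathcomp Require Import all_boot all_order all_algebra all_fingroup.
From mathcomp Require Import zify.
From Stdlib Require Import Classical ClassicalEpsilon.
Set Implicit Arguments. Unset Strict Implicit. Unset Printing Implicit Defensive.
Import GRing.Theory.
Local Open Scope ring_scope.

Definition pb (T : Type) (P : T -> Prop) : pred T :=
  fun x => if excluded_middle_informative (P x) then true else false.
Lemma pbP T (P : T -> Prop) x : reflect (P x) (pb P x).
Proof. rewrite /pb; case: excluded_middle_informative => h; constructor => //. Qed.

Section SubTrick.
Variables (n : nat) (A : algType rat) (Y : nat -> A) (P : A -> Prop).
Hypothesis P1 : P 1.
Hypothesis Plin : forall (c : rat) x y, P x -> P y -> P (c *: x + y).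
Hypothesis Pmul : forall x y, P x -> P y -> P (x * y).
Hypothesis PY : forall i, (1 <= i < n)%N -> P (Y i).

Definition SP := pb P.
Lemma SP_closed : subalg_closed SP.
Proof.
split; first by apply/pbP.
- by move=> c u v /pbP hu /pbP hv; apply/pbP; apply: Plin.
- by move=> u v /pbP hu /pbP hv; apply/pbP; apply: Pmul.
Qed.
HB.instance Definition _ := GRing.isSubalgClosed.Build rat A SP SP_closed.
Notation ST := {x : A | SP x}.
HB.instance Definition _ := [Choice of ST by <:].
HB.instance Definition _ := [SubChoice_isSubAlgebra of ST by <:].

Lemma sub_trick : is_nilCoxeter n Y -> forall a, P a.
Proof.
case=> rels univ.
pose Z i : ST := if (1 <= i < n)%N =P true is ReflectT h then Sub (Y i) (introT (pbP _ _) (PY h)) else 0.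
have ZE i : (1 <= i < n)%N -> val (Z i) = Y i.
  by move=> h; rewrite /Z; case: eqP => // h'.
have relsZ : nilCoxeter_rels n Z.
  case: rels => r1 r2 r3; split.
  - by move=> i hi; apply: val_inj; rewrite rmorphM /= ZE // r1.
  - move=> i j hi hj hij; apply: val_inj; rewrite !rmorphM /= !ZE //; exact: r2.
  - move=> i h1 h2; have hi : (1 <= i < n)%N by apply/andP; split => //; apply: ltn_trans h2.
    have hi1 : (1 <= i.+1 < n)%N by apply/andP; split.
    by apply: val_inj; rewrite !rmorphM /= !ZE // r3.
have [f [fh fY _]] := univ ST Z relsZ.
have [g [gh gY guniq]] := univ A Y rels.
have idh : is_alg_hom (fun x : A => x) by [].
have vfh : is_alg_hom (fun x => val (f x)).
  case: fh => f1 f2 f3; split.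
  - by move=> c x y; rewrite f1 raddfD /=; congr (_ + _); exact: (linearZ _ c (f x)).
  - by rewrite f2 rmorph1.
  - by move=> x y; rewrite f3 rmorphM.
move=> a.
have e1 := guniq _ idh (fun i _ => erefl).
have e2 := guniq _ vfh (fun i hi => etrans (congr1 val (fY i hi)) (ZE i hi)).
have -> : a = val (f a) by exact: etrans (e1 a) (esym (e2 a)).
by apply/pbP; exact: valP.
Qed.
End SubTrick.

Section Span.
Variable (A : algType rat).
Definition inspan (s : seq A) (x : A) := exists c : nat -> rat, x = \sum_(i < size s) c i *: s`_i.

Lemma inspan0 s : inspan s 0.
Proof. by exists (fun _ => 0); rewrite big1 // => i _; rewrite scale0r. Qed.

Lemma inspanL s (a : rat) x y : inspan s x -> inspan s y -> inspan s (a *: x + y).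
Proof.
move=> [c ->] [d ->]; exists (fun i => a * c i + d i).
rewrite scaler_sumr -big_split /=; apply: eq_bigr => i _.
by rewrite scalerDl scalerA.
Qed.

Lemma inspanD s x y : inspan s x -> inspan s y -> inspan s (x + y).
Proof. by move=> hx hy; rewrite -[x]scale1r; apply: inspanL. Qed.

Lemma inspanZ s (a : rat) x : inspan s x -> inspan s (a *: x).
Proof. by move=> hx; rewrite -[_ *: _]addr0; apply: inspanL => //; apply: inspan0. Qed.

Lemma inspan_mem s x : x \in s -> inspan s x.
Proof.
move=> xs; exists (fun i => if i == index x s then 1 else 0).
have hx : (index x s < size s)%N by rewrite index_mem.
rewrite (bigD1 (Ordinal hx)) //= eqxx scale1r nth_index //.
rewrite big1 ?addr0 // => i /eqP ne; case: eqP => [e|]; last by rewrite scale0r.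
by case: ne; apply: val_inj; rewrite /= e.
Qed.

Lemma inspan_sum s (I : Type) (r : seq I) (F : I -> A) :
  (forall i, inspan s (F i)) -> inspan s (\sum_(i <- r) F i).
Proof.
move=> h; elim: r => [|a r ih].
  rewrite big_nil; exact: inspan0.
rewrite big_cons; apply: inspanD => //.
Qed.

Lemma inspan_lin s t (f : A -> A) :
  (forall (c : rat) x y, f (c *: x + y) = c *: f x + f y) ->
  (forall x, x \in s -> inspan t (f x)) -> forall x, inspan s x -> inspan t (f x).
Proof.
move=> fl hs x [c ->].
have f0 : f 0 = 0.
  by have := fl (-1) 0 0; rewrite scaler0 addr0 scaleN1r addNr.
have fD : forall u v, f (u + v) = f u + f v.
  by move=> u v; have := fl 1 u v; rewrite !scale1r.
have fS : forall (r : seq 'I_(size s)), f (\sum_(i <- r) c i *: s`_i) = \sum_(i <- r) c i *: f s`_i.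
  elim=> [|a r ih]; rewrite ?big_nil ?big_cons //.
  by rewrite fD ih -[c a *: s`_a]addr0 fl f0 addr0.
rewrite fS; apply: inspan_sum => i; apply: inspanZ; apply: hs; exact: mem_nth.
Qed.
End Span.

Section Words.
Variables (n : nat) (A : algType rat) (Y : nat -> A).
Hypothesis rels : nilCoxeter_rels n Y.

Definition Yw (w : seq nat) : A := foldr (fun i acc => Y i * acc) 1 w.
Lemma Yw_cat u v : Yw (u ++ v) = Yw u * Yw v.
Proof. by elim: u => [|a u ih] /=; rewrite ?mul1r // ih mulrA. Qed.
Lemma Yw_rcons u i : Yw (rcons u i) = Yw u * Y i.
Proof. by rewrite -cats1 Yw_cat /= mulr1. Qed.

Lemma Yw_comm w i : (1 <= i < n)%N ->
  all (fun j => (1 <= j < n) && ((i.+1 < j) || (j.+1 < i)))%N w -> Y i * Yw w = Yw w * Y i.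
Proof.
case: rels => _ r2 _ hi; elim: w => [|a w ih] /=; first by rewrite mulr1 mul1r.
case/andP => /andP [ha hia] hw.
by rewrite mulrA (r2 i a hi ha hia) -!mulrA ih.
Qed.

Definition dw (hi d : nat) : seq nat := [seq (hi - j)%N | j <- iota 0 d].
Lemma dw_add hi a b : dw hi (a + b) = dw hi a ++ dw (hi - a) b.
Proof.
rewrite /dw iotaD map_cat; congr (_ ++ _).
rewrite add0n -[a]addn0 iotaDl -map_comp addn0; apply: eq_map => j /=; lia.
Qed.
Lemma dwS hi b : dw hi b.+1 = hi :: dw hi.-1 b.
Proof.
rewrite /dw /= subn0; congr (_ :: _).
have -> : iota 1 b = map (addn 1) (iota 0 b) by rewrite -iotaDl.
rewrite -map_comp; apply: eq_map => j /=; lia.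
Qed.
Lemma dwSr hi d : dw hi d.+1 = rcons (dw hi d) (hi - d)%N.
Proof. by rewrite -addn1 dw_add cats1 /dw /= subn0. Qed.
Lemma mem_dw j hi d : (j \in dw hi d) = has (fun x => j == hi - x)%N (iota 0 d).
Proof.
apply/mapP/hasP => [[x xi ->]|[x xi /eqP ->]]; by exists x.
Qed.

Fixpoint NF (k : nat) : seq (seq nat) :=
  if k is k'.+1 then [seq u ++ dw k d | u <- NF k', d <- iota 0 k.+1] else [:: [::]].

Lemma NFS k : NF k.+1 = [seq u ++ dw k.+1 d | u <- NF k, d <- iota 0 k.+2].
Proof. by []. Qed.

Lemma size_NF k : size (NF k) = k.+1`!.
Proof.
elim: k => [|k ih] //.
rewrite (size_allpairs (fun u d => u ++ dw k.+1 d)) ih size_iota [in RHS]factS mulnC; reflexivity.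
Qed.

Lemma nil_NF k : [::] \in NF k.
Proof.
elim: k => [|k ih] //; rewrite NFS; apply/allpairsP; exists ([::], 0%N) => /=.
by split => //; rewrite mem_iota.
Qed.

Lemma NF_letters k u : u \in NF k -> all (fun j => 1 <= j <= k)%N u.
Proof.
elim: k u => [|k ih] u; first by rewrite inE => /eqP ->.
rewrite NFS; case/allpairsP => [[v d]] [hv hd ->]; rewrite mem_iota in hd; simpl in *; rewrite all_cat.
apply/andP; split.
  by apply: sub_all (ih v hv) => j /andP [h1 h2]; rewrite h1 ltnW.
apply/allP => j; rewrite mem_dw => /hasP [x]; rewrite mem_iota => hx /eqP ->.
move: hx hd; lia.
Qed.

Definition NFs k := map Yw (NF k).

Lemma NF_step k x d : (d < k.+2)%N -> inspan (NFs k) x -> inspan (NFs k.+1) (x * Yw (dw k.+1 d)).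
Proof.
move=> hd; apply: (inspan_lin (f := fun x => x * Yw (dw k.+1 d))).
  by move=> c u v; rewrite mulrDl scalerAl.
move=> y /mapP [v hv ->]; apply: inspan_mem; rewrite -Yw_cat; apply: map_f.
by rewrite NFS; apply/allpairsP; exists (v, d); split => //; rewrite mem_iota.
Qed.

Lemma NF_closed k : (k < n)%N -> forall u, u \in NF k -> forall i, (1 <= i <= k)%N ->
  inspan (NFs k) (Yw u * Y i).
Proof.
case: rels => r1 r2 r3.
elim: k => [|k ih] hk u; first by move=> _ i; lia.
rewrite NFS; move/allpairsP => [[v d]] [hv hd ->] i hi; rewrite mem_iota add0n in hd; simpl in *.
rewrite Yw_cat -mulrA.
have [h1|h1] := ltnP i.+1 (k.+2 - d).
  rewrite -Yw_comm; first last.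
  - apply/allP => j; rewrite mem_dw => /hasP [x]; rewrite mem_iota => hx /eqP ->.
    move: hx h1 hi hk; lia.
  - move: hi hk h1; lia.
  rewrite mulrA; apply: NF_step => //; apply: ih => //; [move: hk; lia | move: h1 hi; lia].
have [h2|h2] := eqVneq i.+1 (k.+2 - d)%N.
  have hdk : (d <= k)%N by move: h2 hi; lia.
  have -> : Yw (dw k.+1 d) * Y i = Yw (dw k.+1 d.+1).
    by rewrite dwSr Yw_rcons; congr (_ * Y _); move: h2; lia.
  rewrite -Yw_cat; apply: inspan_mem; apply: map_f; rewrite NFS; apply/allpairsP; exists (v, d.+1).
  split => //; rewrite mem_iota /=; lia.
have [h3|h3] := eqVneq i (k.+2 - d)%N.
  have hd1 : (0 < d)%N by move: h3 hi; lia.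
  rewrite -(prednK hd1) dwSr Yw_rcons -mulrA.
  have -> : (k.+1 - d.-1 = i)%N by move: h3 hd1; lia.
  rewrite r1 ?mulr0; [exact: inspan0 | move: hi hk; lia].
have hlow : (k.+2 - d < i)%N by move: h1 h2 h3; lia.
pose e := (k.+1 - i)%N.
have hde : d = (e + (d - e - 2).+2)%N by rewrite /e; move: hlow hi hd; lia.
have hi1 : (1 <= i.-1)%N by move: hlow hd; lia.
have -> : Yw (dw k.+1 d) * Y i = Y i.-1 * Yw (dw k.+1 d).
  rewrite hde dw_add !dwS !Yw_cat /=.
  have ei : (k.+1 - e = i)%N by rewrite /e; move: hi; lia.
  rewrite ei.
  set Q := dw i.-1.-1 _.
  set P := dw k.+1 e.
  have hQ : Yw Q * Y i = Y i * Yw Q.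
    symmetry; apply: Yw_comm; first by move: hi hk; lia.
    apply/allP => j; rewrite mem_dw => /hasP [x]; rewrite mem_iota => hx /eqP ->.
    move: hx hi hi1 hk; lia.
  have hP : Y i.-1 * Yw P = Yw P * Y i.-1.
    apply: Yw_comm; first by move: hi hk; lia.
    apply/allP => j; rewrite mem_dw => /hasP [x]; rewrite mem_iota => hx /eqP ->.
    move: hx hi hi1 hk; rewrite /e; lia.
  have br : Y i * (Y i.-1 * Y i) = Y i.-1 * (Y i * Y i.-1).
    have := r3 i.-1 hi1; rewrite prednK; last by move: hi1; lia.
    by move=> h; rewrite !mulrA -h //; move: hi hk; lia.
  rewrite -!mulrA hQ !mulrA -[Yw P * Y i * Y i.-1 * Y i]mulrA -[Yw P * Y i * (Y i.-1 * Y i)]mulrA br.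
  by rewrite !mulrA -hP.
rewrite mulrA; apply: NF_step => //; apply: ih => //; [move: hk; lia | move: hi hi1 hlow; lia].
Qed.
End Words.

Lemma tpv (k : nat) (x y z : 'I_k) : (tperm x y z : nat) =
  if (z : nat) == x then (y : nat) else if (z : nat) == y then (x : nat) else (z : nat).
Proof.
case: tpermP => [->|->|hx hy]; first by rewrite eqxx.
  by case: eqP => [->|]; rewrite ?eqxx.
by rewrite !val_eqE; case: eqP => // _; case: eqP.
Qed.

Ltac split_eqs :=
  repeat (match goal with |- context [ (?a == ?b)%N ] =>
    lazymatch a with context [if _ then _ else _] => fail | _ =>
    lazymatch b with context [if _ then _ else _] => fail | _ =>
    case: (a =P b) => ? /= end end end).

Section Model.
Variable m : nat.
Local Notation n := m.+1.
Local Notation T := 'I_m.+1.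
Local Notation P := {perm 'I_m.+1}.

Definition aO (i : nat) : T := inord i.-1.
Definition bO (i : nat) : T := inord i.
Lemma aOv i : (i <= m)%N -> (aO i : nat) = i.-1.
Proof. move=> h; rewrite /aO inordK //; lia. Qed.
Lemma bOv i : (i <= m)%N -> (bO i : nat) = i.
Proof. move=> h; rewrite /bO inordK //; lia. Qed.
Definition tp i : P := tperm (aO i) (bO i).

Definition condL i (p : P) : bool := (p (aO i) < p (bO i))%N.
Definition nxtL i (p : P) : P := (tp i * p)%g.
Definition condR i (p : P) : bool := ((p^-1)%g (aO i) < (p^-1)%g (bO i))%N.
Definition nxtR i (p : P) : P := (p * tp i)%g.

Lemma tp_inv i : (tp i * tp i = 1)%g.
Proof. exact: tperm2. Qed.
Lemma nxtLK i : involutive (nxtL i).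
Proof. by move=> p; rewrite /nxtL mulgA tp_inv mul1g. Qed.
Lemma nxtRK i : involutive (nxtR i).
Proof. by move=> p; rewrite /nxtR -mulgA tp_inv mulg1. Qed.

Lemma condL_nxt i p : (1 <= i <= m)%N -> condL i (nxtL i p) = ~~ condL i p.
Proof.
move=> hi; rewrite /condL /nxtL !permM /tp tpermL tpermR.
have h : (p (aO i) : nat) != p (bO i).
  rewrite val_eqE (inj_eq perm_inj) -val_eqE /= aOv ?bOv //; lia.
by rewrite ltnNge leq_eqVlt (negbTE h).
Qed.

Definition Kp := #|P|.-1.
Lemma eK : Kp.+1 = #|P|.
Proof. by rewrite /Kp prednK // card_Sn fact_gt0. Qed.
Definition pv (k : 'I_Kp.+1) : P := enum_val (cast_ord eK k).
Definition pi (p : P) : 'I_Kp.+1 := cast_ord (esym eK) (enum_rank p).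
Lemma pvK : cancel pv pi.
Proof. by move=> k; rewrite /pv /pi enum_valK cast_ordK. Qed.
Lemma piK : cancel pi pv.
Proof. by move=> p; rewrite /pv /pi cast_ordKV enum_rankK. Qed.

Local Notation M := 'M[rat]_Kp.+1.
Lemma idE (k : 'I_Kp.+1) p : (pv k == p) = (k == pi p).
Proof. exact: (can2_eq pvK piK). Qed.
Definition Lm i : M := \matrix_(r, c) ((condL i (pv c) && (pv r == nxtL i (pv c)))%:R).
Definition Rm i : M := \matrix_(r, c) ((condR i (pv c) && (pv r == nxtR i (pv c)))%:R).

Lemma sum_single (F : 'I_Kp.+1 -> rat) (k0 : 'I_Kp.+1) :
  (forall k, k != k0 -> F k = 0) -> \sum_k F k = F k0.
Proof. by move=> h; rewrite (bigD1 k0) //= big1 ?addr0 // => k /h. Qed.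

Lemma mulmx_L (X : M) i r c : (X *m Lm i) r c = if condL i (pv c) then X r (pi (nxtL i (pv c))) else 0.
Proof.
rewrite mxE; case: ifP => hc.
  rewrite (sum_single (k0 := pi (nxtL i (pv c)))).
    by rewrite mxE hc piK eqxx mulr1.
  move=> k hk; rewrite mxE hc /=; case: eqP; rewrite ?mulr0 // => e.
  by case/eqP: hk; rewrite -e pvK.
by rewrite big1 // => k _; rewrite mxE hc mulr0.
Qed.

Lemma mulmx_R (X : M) i r c : (X *m Rm i) r c = if condR i (pv c) then X r (pi (nxtR i (pv c))) else 0.
Proof.
rewrite mxE; case: ifP => hc.
  rewrite (sum_single (k0 := pi (nxtR i (pv c)))).
    by rewrite mxE hc piK eqxx mulr1.
  move=> k hk; rewrite mxE hc /=; case: eqP; rewrite ?mulr0 // => e.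
  by case/eqP: hk; rewrite -e pvK.
by rewrite big1 // => k _; rewrite mxE hc mulr0.
Qed.

Lemma L_mulmx (X : M) i r c : (Lm i *m X) r c =
  if condL i (nxtL i (pv r)) then X (pi (nxtL i (pv r))) c else 0.
Proof.
rewrite mxE; case: ifP => hc.
  rewrite (sum_single (k0 := pi (nxtL i (pv r)))).
    by rewrite mxE piK hc nxtLK eqxx mul1r.
  move=> k hk; rewrite mxE; case: eqP; rewrite ?andbF ?mul0r // => e.
  by case/eqP: hk; rewrite e nxtLK pvK.
rewrite big1 // => k _; rewrite mxE; case: eqP; rewrite ?andbF ?mul0r // => e.
by move: hc; rewrite e nxtLK => ->; rewrite mul0r.
Qed.

Lemma R_mulmx (X : M) i r c : (Rm i *m X) r c =
  if condR i (nxtR i (pv r)) then X (pi (nxtR i (pv r))) c else 0.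
Proof.
rewrite mxE; case: ifP => hc.
  rewrite (sum_single (k0 := pi (nxtR i (pv r)))).
    by rewrite mxE piK hc nxtRK eqxx mul1r.
  move=> k hk; rewrite mxE; case: eqP; rewrite ?andbF ?mul0r // => e.
  by case/eqP: hk; rewrite e nxtRK pvK.
rewrite big1 // => k _; rewrite mxE; case: eqP; rewrite ?andbF ?mul0r // => e.
by move: hc; rewrite e nxtRK => ->; rewrite mul0r.
Qed.

Lemma tp_comm i j : (1 <= i <= m)%N -> (1 <= j <= m)%N -> ((i.+1 < j) || (j.+1 < i))%N ->
  (tp i * tp j = tp j * tp i)%g.
Proof.
move=> hi hj hij; apply/permP => v; apply/val_inj => /=.
rewrite !permM /tp !tpv !aOv ?bOv //; try lia. split_eqs; lia.
Qed.

Lemma braid_perm (x y z : T) : (x : nat) <> y -> (y : nat) <> z -> (x : nat) <> z ->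
  (tperm x y * tperm y z * tperm x y = tperm y z * tperm x y * tperm y z)%g.
Proof.
move=> h1 h2 h3; apply/permP => v; apply/val_inj => /=.
rewrite !permM !tpv; split_eqs; lia.
Qed.

Lemma braid_cond (x y z : T) (c : P) : x != y -> y != z -> x != z ->
  [&& (c x < c y)%N, ((tperm x y * c)%g y < (tperm x y * c)%g z)%N &
      ((tperm y z * (tperm x y * c))%g x < (tperm y z * (tperm x y * c))%g y)%N] =
  ((c x < c y) && (c y < c z))%N.
Proof.
move=> h1 h2 h3.
have e1 : tperm x y z = z by apply: tpermD.
have e2 : tperm y z x = x by apply: tpermD; rewrite eq_sym.
rewrite !permM ?(tpermL, tpermR, e1, e2).
case: (ltnP (c x) (c y)) => //= hxy.
apply/idP/idP; [by case/andP|] => h; rewrite h andbT; exact: ltn_trans hxy h.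
Qed.

Lemma braid_cond' (x y z : T) (c : P) : x != y -> y != z -> x != z ->
  [&& (c y < c z)%N, ((tperm y z * c)%g x < (tperm y z * c)%g y)%N &
      ((tperm x y * (tperm y z * c))%g y < (tperm x y * (tperm y z * c))%g z)%N] =
  ((c x < c y) && (c y < c z))%N.
Proof.
move=> h1 h2 h3.
have e1 : tperm x y z = z by apply: tpermD.
have e2 : tperm y z x = x by apply: tpermD; rewrite eq_sym.
rewrite !permM ?(tpermL, tpermR, e1, e2).
case: (ltnP (c y) (c z)) => hyz; rewrite ?andbF ?andbT //=.
apply/idP/idP; [by case/andP|] => h; rewrite h andbT; exact: ltn_trans h hyz.
Qed.

Lemma L_rels : nilCoxeter_rels m.+1 Lm.
Proof.
split.
- move=> i hi; apply/matrixP => r c; rewrite -mulmxE mulmx_L [RHS]mxE.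
  case: ifP => hc //; rewrite mxE piK condL_nxt ?hc //; lia.
- move=> i j hi hj hij; apply/matrixP => r c; rewrite -!mulmxE !mulmx_L !mxE !piK.
  have hi' : (1 <= i <= m)%N by lia.
  have hj' : (1 <= j <= m)%N by lia.
  have cd : forall k l p, (1 <= k <= m)%N -> (1 <= l <= m)%N -> ((k.+1 < l) || (l.+1 < k))%N ->
     condL k (nxtL l p) = condL k p.
    move=> k l p hk hl hkl; rewrite /condL /nxtL !permM; congr (p _ < p _)%N; apply: val_inj => /=;
    rewrite /tp tpv !aOv ?bOv //; try lia; split_eqs; lia.
  rewrite !cd //; last by rewrite orbC.
  rewrite /nxtL !mulgA (tp_comm hi' hj' hij).
  by case: (condL i _); case: (condL j _).
- move=> i h1 h2; apply/matrixP => r c; rewrite -!mulmxE !mulmx_L !mxE !piK.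
  have hi : (1 <= i <= m)%N by lia.
  have hi1 : (1 <= i.+1 <= m)%N by lia.
  have ex : aO i.+1 = bO i by [].
  have d1 : aO i != bO i by rewrite -val_eqE /= aOv ?bOv //; lia.
  have d2 : bO i != bO i.+1 by rewrite -val_eqE /= bOv ?bOv //; lia.
  have d3 : aO i != bO i.+1 by rewrite -val_eqE /= aOv ?bOv //; lia.
  have := braid_cond (pv c) d1 d2 d3.
  have := braid_cond' (pv c) d1 d2 d3.
  rewrite /condL /nxtL /tp ex.
  have bp := braid_perm (x := aO i) (y := bO i) (z := bO i.+1).
  rewrite !mulgA bp; try by apply/eqP; rewrite val_eqE.
  have H : forall (a b c d : bool), (if a then (if b then (c && d)%:R else 0) else 0) = (([&& a, b & c]) && d)%:R :> rat by do 4 case.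
  by move=> E1 E2; rewrite !H E1 E2.
Qed.

Lemma tp_ord i (p q : T) : (1 <= i <= m)%N ->
  ~~ ((p == aO i) && (q == bO i)) -> ~~ ((p == bO i) && (q == aO i)) ->
  (tp i p < tp i q)%N = (p < q)%N.
Proof.
move=> hi; rewrite -!val_eqE /= /tp !tpv !aOv ?bOv //; try lia.
move=> h1 h2; apply/idP/idP; split_eqs; rewrite ?eqxx //= in h1 h2 *; lia.
Qed.

Lemma LR_cond i j (c : P) : (1 <= i <= m)%N -> (1 <= j <= m)%N ->
  condR j c && condL i (nxtR j c) = condL i c && condR j (nxtL i c).
Proof.
move=> hi hj; rewrite /condR /condL /nxtR /nxtL invMg !permM /tp tpermV.
have vab : forall k, (1 <= k <= m)%N -> (aO k < bO k)%N.
  by move=> k hk; rewrite aOv ?bOv //; lia.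
have vba : forall k, (1 <= k <= m)%N -> (bO k < aO k)%N = false.
  by move=> k hk; rewrite aOv ?bOv //; lia.
case: (boolP ((c (aO i) == aO j) && (c (bO i) == bO j))) => [/andP [/eqP e1 /eqP e2]|n1].
  have g1 : (c^-1)%g (aO j) = aO i by rewrite -e1 permK.
  have g2 : (c^-1)%g (bO j) = bO i by rewrite -e2 permK.
  by rewrite e1 e2 g1 g2 ?(tpermL, tpermR) !vba // !andbF.
case: (boolP ((c (aO i) == bO j) && (c (bO i) == aO j))) => [/andP [/eqP e1 /eqP e2]|n2].
  have g1 : (c^-1)%g (bO j) = aO i by rewrite -e1 permK.
  have g2 : (c^-1)%g (aO j) = bO i by rewrite -e2 permK.
  by rewrite e1 e2 g1 g2 ?(tpermL, tpermR) !vba // !andbF.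
rewrite -/(tp i) -/(tp j) (tp_ord hj n1 n2) (tp_ord hi); first by rewrite andbC.
  apply/negP => /andP [/eqP e1 /eqP e2]; move/negP: n1; apply.
  by rewrite -e1 -e2 !permKV !eqxx.
apply/negP => /andP [/eqP e1 /eqP e2]; move/negP: n2; apply.
by rewrite -e1 -e2 !permKV !eqxx.
Qed.

Lemma LR_comm i j : (1 <= i <= m)%N -> (1 <= j <= m)%N -> Lm i *m Rm j = Rm j *m Lm i.
Proof.
move=> hi hj; apply/matrixP => r c; rewrite mulmx_L mulmx_R !mxE !piK.
have e : nxtL i (nxtR j (pv c)) = nxtR j (nxtL i (pv c)) by rewrite /nxtL /nxtR mulgA.
rewrite e; have := LR_cond (pv c) hi hj.
by case: (condR j _); case: (condL i _); case: (condR j _); case: (condL i _).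
Qed.

Definition w0 : P := perm (@rev_ord_inj m.+1).
Lemma w0v v : (w0 v : nat) = (m - v)%N.
Proof. by rewrite permE /=; lia. Qed.

Definition Lw (y : seq nat) : M := foldr (fun i acc => Lm i *m acc) 1%:M y.
Lemma Lw_rcons y i : Lw (rcons y i) = Lw y *m Lm i.
Proof. elim: y => [|a y ih] /=; first by rewrite mul1mx mulmx1. by rewrite ih mulmxA. Qed.
Definition validw (y : seq nat) := all (fun i => 1 <= i <= m)%N y.

Definition mu (p : P) : nat := (\sum_(v : T) (v * p v))%N.

Lemma incr_id (f : T -> nat) : (forall v, f v < m.+1)%N ->
  (forall j, (j < m)%N -> (f (inord j) < f (inord j.+1))%N) -> forall v, f v = v.
Proof.
move=> hf hinc.
have ge : forall j, (j <= m)%N -> (j <= f (inord j))%N.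
  elim=> [|j ih] hj //; have := hinc j hj; have := ih (ltnW hj); lia.
have le : forall d, (d <= m)%N -> (f (inord (m - d)) <= m - d)%N.
  elim=> [|d ih] hd; first by have := hf (inord (m - 0)); lia.
  have := hinc (m - d.+1)%N; have -> : (m - d.+1).+1 = (m - d)%N by lia.
  have := ih (ltnW hd); lia.
move=> v; have hv := ltn_ord v.
have := ge v; have := le (m - v)%N; rewrite inord_val.
have -> : (m - (m - v))%N = v by lia.
rewrite inord_val; lia.
Qed.

Lemma desc_exists (w : P) : w != 1%g -> exists i, (1 <= i <= m)%N /\ (w (bO i) < w (aO i))%N.
Proof.
move=> hw; case: (boolP [exists i : 'I_m, w (bO i.+1) < w (aO i.+1)]%N).
  by case/existsP => i hi; exists i.+1; split => //; apply/andP; split => //; apply: ltn_ord.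
rewrite negb_exists => /forallP h; case/eqP: hw; apply/permP => v; apply/val_inj.
rewrite perm1 /=; apply: (incr_id (f := fun v => (w v : nat))) => // j hj.
have := h (Ordinal hj); rewrite /aO /bO /= -leqNgt leq_eqVlt; case/orP => // /eqP e.
have : w (inord j) = w (inord j.+1) by apply: val_inj.
move/perm_inj => /(congr1 (@nat_of_ord _)); rewrite !inordK; lia.
Qed.

Lemma asc_exists (w : P) : w != w0 -> exists i, (1 <= i <= m)%N /\ (w (aO i) < w (bO i))%N.
Proof.
move=> hw; case: (boolP [exists i : 'I_m, w (aO i.+1) < w (bO i.+1)]%N).
  by case/existsP => i hi; exists i.+1; split => //; apply/andP; split => //; apply: ltn_ord.
rewrite negb_exists => /forallP h; case/eqP: hw; apply/permP => v; apply/val_inj => /=.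
have hinc : forall j, (j < m)%N -> (m - w (inord j) < m - w (inord j.+1))%N.
  move=> j hj.
  have := h (Ordinal hj); rewrite /aO /bO /= -leqNgt leq_eqVlt; case/orP => [/eqP e|].
    have : w (inord j.+1) = w (inord j) by apply: val_inj.
    move/perm_inj => /(congr1 (@nat_of_ord _)); rewrite !inordK; lia.
  have := ltn_ord (w (inord j)); have := ltn_ord (w (inord j.+1)); lia.
have hb : forall u, (m - w u < m.+1)%N by move=> u; lia.
have := incr_id hb hinc v; rewrite w0v; have := ltn_ord (w v); lia.
Qed.

Lemma mu_step (w : P) i : (1 <= i <= m)%N -> (w (bO i) < w (aO i))%N -> (mu w < mu (tp i * w)%g)%N.
Proof.
move=> hi hw.
have e : mu (tp i * w)%g = (\sum_(v : T) (tp i v * w v))%N.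
  rewrite /mu (reindex_inj (h := tp i) perm_inj) /=; apply: eq_bigr => v _.
  by rewrite permM tpermK.
rewrite e /mu (bigD1 (aO i)) //= (bigD1 (aO i) (P := xpredT)) //=.
have ab : bO i != aO i by rewrite -val_eqE /= aOv ?bOv //; lia.
rewrite (bigD1 (bO i)) //= (bigD1 (bO i) (P := fun v => v != aO i)) //=.
have -> : (\sum_(v | (v != aO i) && (v != bO i)) tp i v * w v =
          \sum_(v | (v != aO i) && (v != bO i)) v * w v)%N.
  apply: eq_bigr => v /andP [h1 h2]; rewrite /tp tpermD // eq_sym //.
rewrite /tp tpermL tpermR; move: hw; rewrite aOv ?bOv //; try lia.
move=> hw; rewrite !addnA ltn_add2r; move: (w (aO i) : nat) (w (bO i) : nat) hw => A B hw.
case: (i) hi => // k _ /=; rewrite !mulSn; lia.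
Qed.

Lemma mu_bound (w : P) : (mu w <= m.+1 * (m * m))%N.
Proof.
rewrite /mu; have -> : (m.+1 * (m * m) = \sum_(v : T) m * m)%N by rewrite sum_nat_const card_ord.
apply: leq_sum => v _; have := ltn_ord v; have := ltn_ord (w v); nia.
Qed.

Lemma col_reach (w : P) : exists y, validw y /\ forall k, Lw y k (pi 1%g) = (pv k == w)%:R.
Proof.
suff: forall d w, (m.+1 * (m * m) - mu w <= d)%N ->
  exists y, validw y /\ forall k, Lw y k (pi 1%g) = (pv k == w)%:R.
  by move=> h; apply: (h _ w).
clear w; elim=> [|d ih] w hd.
- case: (eqVneq w 1%g) => [->|hw]; last first.
    have [i [hi hwi]] := desc_exists hw; have := mu_step hi hwi; have := mu_bound (tp i * w)%g; lia.
  exists [::]; split => // k; by rewrite /= mxE idE.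
- case: (eqVneq w 1%g) => [->|hw].
    exists [::]; split => // k; by rewrite /= mxE idE.
  have [i [hi hwi]] := desc_exists hw; have hmu := mu_step hi hwi; have hb := mu_bound (tp i * w)%g.
  have [y [vy hy]] := ih (tp i * w)%g ltac:(lia).
  exists (i :: y); split; first by rewrite /validw /= hi.
  move=> k; rewrite /= L_mulmx hy piK /nxtL (inj_eq (mulgI _)).
  case: (eqVneq (pv k) w) => [->|]; last by case: ifP.
  by rewrite condL_nxt // /condL -leqNgt ltnW.
Qed.

Lemma row_reach (w : P) : exists y, validw y /\ forall k, Lw y (pi w0) k = (pv k == w)%:R.
Proof.
suff: forall d w, (mu w <= d)%N ->
  exists y, validw y /\ forall k, Lw y (pi w0) k = (pv k == w)%:R.
  by move=> h; apply: (h _ w).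
clear w; elim=> [|d ih] w hd.
- case: (eqVneq w w0) => [->|hw]; last first.
    have [i [hi hwi]] := asc_exists hw.
    have hc : ((tp i * w)%g (bO i) < (tp i * w)%g (aO i))%N by rewrite !permM /tp tpermL tpermR.
    have := mu_step hi hc; rewrite mulgA tp_inv mul1g; lia.
  exists [::]; split => // k; by rewrite /= mxE idE eq_sym.
- case: (eqVneq w w0) => [->|hw].
    exists [::]; split => // k; by rewrite /= mxE idE eq_sym.
  have [i [hi hwi]] := asc_exists hw.
  have hc : ((tp i * w)%g (bO i) < (tp i * w)%g (aO i))%N by rewrite !permM /tp tpermL tpermR.
  have := mu_step hi hc; rewrite mulgA tp_inv mul1g => hmu.
  have [y [vy hy]] := ih (tp i * w)%g ltac:(lia).
  exists (rcons y i); split; first by rewrite /validw all_rcons hi.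
  move=> k; rewrite Lw_rcons mulmx_L hy piK /nxtL (inj_eq (mulgI _)).
  case: (eqVneq (pv k) w) => [->|]; last by case: ifP.
  by rewrite /condL hwi.
Qed.

Lemma col1 (X : M) j r : (1 <= j <= m)%N -> (X *m Rm j) r (pi 1%g) = (X *m Lm j) r (pi 1%g).
Proof.
move=> hj; rewrite mulmx_L mulmx_R piK /condR /condL /nxtR /nxtL invg1 !perm1 mul1g mulg1.
by rewrite aOv ?bOv //; case: j hj.
Qed.

Lemma row_w0 i c : (1 <= i <= m)%N -> Lm i (pi w0) c = Rm (m.+1 - i) (pi w0) c.
Proof.
move=> hi; set j := (m.+1 - i)%N.
have hj : (1 <= j <= m)%N by rewrite /j; lia.
pose q := (tp i * w0)%g.
have q1 : q (aO i) = aO j.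
  apply: val_inj => /=; rewrite permM /tp tpermL w0v bOv ?aOv // /j; lia.
have q2 : q (bO i) = bO j.
  apply: val_inj => /=; rewrite permM /tp tpermR w0v bOv ?aOv // /j; lia.
have eq : q = (w0 * tp j)%g.
  apply/permP => v; apply/val_inj => /=; rewrite /q !permM /tp !tpv !w0v !tpv !aOv ?bOv // /j; try lia.
  have := ltn_ord v; split_eqs; lia.
rewrite !mxE piK.
case: (eqVneq (pv c) q) => [e|ne].
- have c1 : condL i (pv c) by rewrite /condL e q1 q2 aOv ?bOv //; lia.
  have c2 : condR j (pv c).
    rewrite /condR e -q1 -q2 !permK aOv ?bOv //; lia.
  rewrite c1 c2 /nxtL /nxtR e /q mulgA tp_inv mul1g eqxx /=.
  by rewrite -/q eq -mulgA tp_inv mulg1 eqxx.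
- have h1 : (w0 == nxtL i (pv c)) = false.
    apply/negbTE/eqP => e; case/eqP: ne; by rewrite /q e /nxtL mulgA tp_inv mul1g.
  have h2 : (w0 == nxtR j (pv c)) = false.
    apply/negbTE/eqP => e; case/eqP: ne; by rewrite eq e /nxtR -mulgA tp_inv mulg1.
  by rewrite h1 h2 !andbF.
Qed.
End Model.

Lemma span_ind (A : algType rat) (s : seq A) (Q : A -> Prop) :
  Q 0 -> (forall (c : rat) x y, Q x -> Q y -> Q (c *: x + y)) -> (forall x, x \in s -> Q x) ->
  forall x, inspan s x -> Q x.
Proof.
move=> Q0 Ql Qs x [c ->]; apply: big_ind => //.
- by move=> u v hu hv; rewrite -[u]scale1r; apply: Ql.
- by move=> i _; rewrite -[_ *: _]addr0; apply: Ql => //; apply: Qs; apply: mem_nth.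
Qed.

Lemma lin_sum (A : algType rat) (V : lmodType rat) (f : A -> V) :
  (forall (c : rat) x y, f (c *: x + y) = c *: f x + f y) ->
  forall (I : Type) (r : seq I) (P : pred I) (c : I -> rat) (s : I -> A),
  f (\sum_(i <- r | P i) c i *: s i) = \sum_(i <- r | P i) c i *: f (s i).
Proof.
move=> fl I r P c s.
have f0 : f 0 = 0 by have := fl (-1) 0 0; rewrite scaler0 addr0 scaleN1r addNr.
elim: r => [|a r ih]; rewrite ?big_nil // !big_cons; case: (P a) => //.
by rewrite fl ih.
Qed.

Lemma LA1 N (G : 'M[rat]_N) : (forall k, exists c : 'rV_N, c *m G = delta_mx 0 k) ->
  forall c : 'rV_N, c *m G = 0 -> c = 0.
Proof.
move=> h c hc.
have : (1%:M <= G)%MS.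
  apply/row_subP => k; rewrite row1; apply/submxP; have [d hd] := h k; exists d; by rewrite hd.
rewrite sub1mx row_full_unit => hu.
by rewrite -(mulmxK hu c) hc mul0mx.
Qed.

Lemma LA2 N (H : 'M[rat]_N) : (forall c : 'rV_N, c *m H = 0 -> c = 0) ->
  forall b : 'rV_N, exists c, c *m H = b.
Proof.
move=> h b.
have : row_free H.
  rewrite -kermx_eq0; apply/eqP/row_matrixP => i; rewrite row0; apply: h.
  by rewrite -row_mul mulmx_ker row0.
rewrite row_free_unit => hu; exists (b *m invmx H); by rewrite mulmxKV.
Qed.

Section MainSec.
Variables (m : nat) (A : algType rat) (Y : nat -> A).
Hypothesis HA : is_nilCoxeter m.+1 Y.

Lemma rels : nilCoxeter_rels m.+1 Y.
Proof. by case: HA. Qed.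

Local Notation E := (NFs Y m).
Local Notation N := (Kp m).+1.

Lemma sizeE : size E = N.
Proof. by rewrite size_map size_NF eK card_Sn. Qed.

Lemma spanY x : inspan E x -> forall i, (1 <= i <= m)%N -> inspan E (x * Y i).
Proof.
move=> hx i hi; apply: (inspan_lin (f := fun z => z * Y i)) hx.
  by move=> c u v; rewrite mulrDl scalerAl.
move=> z /mapP [u hu ->]; exact: (NF_closed rels (ltnSn m) hu hi).
Qed.

Lemma spanW w : validw m w -> forall x, inspan E x -> inspan E (x * Yw Y w).
Proof.
elim: w => [|a w ih] /=; first by move=> _ x hx; rewrite mulr1.
case/andP => ha hw x hx; rewrite mulrA; apply: ih => //; exact: spanY.
Qed.

Lemma span_all a : inspan E a.
Proof.
apply: (sub_trick (n := m.+1) (Y := Y)) HA a.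
- by apply: inspan_mem; apply: (map_f (Yw Y) (nil_NF m)).
- by move=> c x y; apply: inspanL.
- move=> x y hx hy; apply: (inspan_lin (f := fun z => x * z)) hy.
    by move=> c u v; rewrite mulrDr scalerAr.
  move=> z /mapP [u hu ->]; apply: spanW => //; exact: NF_letters hu.
- move=> i hi; rewrite -[Y i]mul1r; apply: spanY => //.
  by apply: inspan_mem; apply: (map_f (Yw Y) (nil_NF m)).
Qed.

Lemma span_N x : exists c : nat -> rat, x = \sum_(i < N) c i *: E`_i.
Proof. by have [c hc] := span_all x; exists c; rewrite -sizeE. Qed.

Lemma memE x : x \in E -> exists a : 'I_N, x = E`_a.
Proof.
move=> hx; have hi : (index x E < N)%N by rewrite -sizeE index_mem.
by exists (Ordinal hi); rewrite /= nth_index.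
Qed.

Variable f : A -> 'M[rat]_N.
Hypothesis fh : is_alg_hom f.
Hypothesis fY : forall i, (1 <= i < m.+1)%N -> f (Y i) = Lm m i.

Lemma flin (c : rat) x y : f (c *: x + y) = c *: f x + f y.
Proof. by case: fh. Qed.
Lemma fM x y : f (x * y) = f x *m f y.
Proof. by case: fh => _ _ ->; rewrite mulmxE. Qed.
Lemma f0 : f 0 = 0.
Proof. by have := flin (-1) 0 0; rewrite scaler0 addr0 scaleN1r addNr. Qed.

Lemma fYw w : validw m w -> f (Yw Y w) = Lw m w.
Proof.
elim: w => [|a w ih] /=; first by case: fh.
by case/andP => ha hw; rewrite fM fY // ih.
Qed.

Lemma Lw_commR w j : validw m w -> (1 <= j <= m)%N -> Lw m w *m Rm m j = Rm m j *m Lw m w.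
Proof.
move=> hw hj; elim: w hw => [|a w ih] /=; first by rewrite mul1mx mulmx1.
case/andP => ha hw; rewrite -mulmxA ih // !mulmxA LR_comm //.
Qed.

Lemma f_commR x j : (1 <= j <= m)%N -> f x *m Rm m j = Rm m j *m f x.
Proof.
move=> hj; apply: (span_ind (s := E) (Q := fun x => f x *m Rm m j = Rm m j *m f x)) (span_all x).
- by rewrite f0 mul0mx mulmx0.
- by move=> c u v hu hv; rewrite flin mulmxDl mulmxDr -scalemxAl -scalemxAr hu hv.
- move=> z /mapP [u hu ->]; have hw : validw m u := NF_letters hu.
  by rewrite fYw //; apply: Lw_commR.
Qed.

Definition lam x := f x (pi (w0 m)) (pi 1%g).

Lemma lam_lin (c : rat) x y : lam (c *: x + y) = c * lam x + lam y.
Proof. by rewrite /lam flin !mxE. Qed.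
Lemma lam0 : lam 0 = 0.
Proof. by rewrite /lam f0 mxE. Qed.

Lemma lam_gen i x : (1 <= i <= m)%N -> lam (Y i * x) = lam (x * Y (m.+1 - i)).
Proof.
move=> hi; have hj : (1 <= m.+1 - i <= m)%N by lia.
rewrite /lam !fM !fY //; try lia.
have -> : (Lm m i *m f x) (pi (w0 m)) (pi 1%g) = (Rm m (m.+1 - i) *m f x) (pi (w0 m)) (pi 1%g).
  by rewrite !mxE; apply: eq_bigr => k _; rewrite row_w0.
by rewrite -f_commR // col1.
Qed.

Variable psi : A -> A.
Hypothesis Hpsi : is_alg_hom psi.
Hypothesis HpsiY : forall i, (1 <= i < m.+1)%N -> psi (Y i) = Y (m.+1 - i)%N.

Lemma psi_lin (c : rat) x y : psi (c *: x + y) = c *: psi x + psi y.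
Proof. by case: Hpsi. Qed.
Lemma psiM x y : psi (x * y) = psi x * psi y.
Proof. by case: Hpsi. Qed.
Lemma psi0 : psi 0 = 0.
Proof. by have := psi_lin (-1) 0 0; rewrite scaler0 addr0 scaleN1r addNr. Qed.

Lemma lam_psi b x : lam (b * x) = lam (x * psi b).
Proof.
move: x; apply: (span_ind (s := E) (Q := fun b => forall x, lam (b * x) = lam (x * psi b))) (span_all b).
- by move=> x; rewrite psi0 mul0r mulr0.
- move=> c u v hu hv x; rewrite psi_lin mulrDl mulrDr -scalerAl -scalerAr !lam_lin hu hv //.
- move=> z /mapP [u hu ->]; have := NF_letters hu; elim: u {hu} => [|a u ih] /=.
    by move=> _ x; case: Hpsi => _ -> _; rewrite mul1r mulr1.
  case/andP => ha hu x; rewrite -mulrA lam_gen // -mulrA ih // psiM HpsiY; last by lia.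
  by rewrite !mulrA.
Qed.

Definition G : 'M[rat]_N := \matrix_(i, k) f (E`_i) k (pi 1%g).

Lemma rowG (c : nat -> rat) k : (\row_(i < N) c i *m G) 0 k = f (\sum_(i < N) c i *: E`_i) k (pi 1%g).
Proof.
rewrite (lin_sum flin) summxE mxE; apply: eq_bigr => i _; by rewrite !mxE.
Qed.

Lemma Gfree (cr : 'rV[rat]_N) : cr *m G = 0 -> cr = 0.
Proof.
apply: LA1 => k.
have [y [vy hy]] := col_reach (pv k).
have [d hd] := span_N (Yw Y y).
exists (\row_(i < N) d i); apply/rowP => k'.
by rewrite rowG -hd fYw // hy !mxE eqxx /= idE pvK.
Qed.

Lemma row_eq (cr : 'rV[rat]_N) : cr = \row_(i < N) cr 0 (inord i).
Proof. by apply/rowP => i; rewrite mxE inord_val. Qed.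

Lemma indepE (c : nat -> rat) : \sum_(i < N) c i *: E`_i = 0 -> forall i : 'I_N, c i = 0.
Proof.
move=> h i; have := Gfree (cr := \row_(i < N) c i).
have -> : \row_(i < N) c i *m G = 0 by apply/rowP => k; rewrite rowG h f0 !mxE.
by move=> /(_ erefl) /rowP /(_ i); rewrite !mxE.
Qed.

Lemma GamInj t : (forall k, f t k (pi 1%g) = 0) -> t = 0.
Proof.
move=> h; have [c hc] := span_N t.
have h0 : \row_(i < N) c i *m G = 0 by apply/rowP => k; rewrite rowG -hc h mxE.
have := Gfree h0 => /rowP hz.
rewrite hc big1 // => i _; have := hz i; rewrite !mxE => ->; by rewrite scale0r.
Qed.

Lemma lamInj t : (forall y, lam (y * t) = 0) -> t = 0.
Proof.
move=> h; apply: GamInj => k.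
have [y [vy hy]] := row_reach (pv k).
have := h (Yw Y y); rewrite /lam fM fYw // mxE.
rewrite (bigD1 k) //= hy eqxx mul1r big1 ?addr0 // => k' hk.
by rewrite hy idE pvK (negbTE hk) mul0r.
Qed.

Lemma lam_sum (c : 'I_N -> rat) (s : 'I_N -> A) :
  lam (\sum_b c b *: s b) = \sum_b c b * lam (s b).
Proof. by rewrite /lam (lin_sum flin) summxE; apply: eq_bigr => b _; rewrite mxE. Qed.

Lemma lamSurj g : is_Qlinear_functional g -> exists t, forall y, lam (y * t) = g y.
Proof.
move=> hg.
have g0 : g 0 = 0 by have := hg (-1) 0 0; rewrite scaler0 addr0 mulN1r addNr.
pose H : 'M[rat]_N := \matrix_(b, a) lam (E`_a * E`_b).
have HE : forall (cr : 'rV[rat]_N) a, (cr *m H) 0 a = lam (E`_a * \sum_b cr 0 b *: E`_b).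
  move=> cr a; rewrite mulr_sumr (eq_bigr (fun b => cr 0 b *: (E`_a * E`_b))); last first.
    by move=> b _; rewrite scalerAr.
  by rewrite lam_sum mxE; apply: eq_bigr => b _; rewrite mxE.
have ext : forall t, (forall a : 'I_N, lam (E`_a * t) = g E`_a) -> forall y, lam (y * t) = g y.
  move=> t ht y; apply: (span_ind (s := E) (Q := fun y => lam (y * t) = g y)) (span_all y).
  - by rewrite mul0r lam0 g0.
  - by move=> c u v hu hv; rewrite mulrDl -scalerAl lam_lin hg hu hv.
  - by move=> x /memE [a ->].
have Hinj : forall cr : 'rV[rat]_N, cr *m H = 0 -> cr = 0.
  move=> cr hc.
  have ht : \sum_b cr 0 b *: E`_b = 0.
    apply: lamInj => y.
    apply: (span_ind (s := E) (Q := fun y => lam (y * \sum_b cr 0 b *: E`_b) = 0)) (span_all y).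
    - by rewrite mul0r lam0.
    - by move=> c u v hu hv; rewrite mulrDl -scalerAl lam_lin hu hv mulr0 addr0.
    - by move=> x /memE [a ->]; rewrite -HE hc mxE.
  apply/rowP => b.
  have := indepE (c := fun i => cr 0 (inord i)).
  rewrite (eq_bigr (fun i => cr 0 i *: E`_i)); last by move=> i _; rewrite inord_val.
  by move=> /(_ ht b); rewrite inord_val mxE.
have [cr hcr] := LA2 Hinj (\row_a g E`_a).
exists (\sum_b cr 0 b *: E`_b); apply: ext => a.
by rewrite -HE hcr mxE.
Qed.
End MainSec.


Lemma main_succ (m : nat) (A : algType rat) (Y : nat -> A)
  (HA : is_nilCoxeter m.+1 Y)
  (psi : A -> A) (Hpsi : is_alg_hom psi)
  (HpsiY : forall i, (1 <= i < m.+1)%N -> psi (Y i) = Y (m.+1 - i)%N) :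
  exists Phi : A -> A -> rat,
    [/\ (forall t, is_Qlinear_functional (Phi t)),
        (forall (c : rat) (t s y : A), Phi (c *: t + s) y = c * Phi t y + Phi s y),
        (forall t s, Phi t =1 Phi s -> t = s),
        (forall f : A -> rat, is_Qlinear_functional f -> exists t, Phi t =1 f)
      & (forall a t b y : A, Phi (a * t * psi b) y = Phi t (b * y * a))].
Proof.
have [f [fh fY _]] := HA.2 _ (Lm m) (L_rels m).
exists (fun t y => lam f (y * t)); split.
- by move=> t c x y; rewrite mulrDl -scalerAl lam_lin.
- by move=> c t s y; rewrite mulrDr -scalerAr lam_lin.
- move=> t s h; apply/eqP; rewrite -subr_eq0; apply/eqP; apply: (lamInj HA fh fY) => y.
  have -> : y * (t - s) = (-1) *: (y * s) + y * t by rewrite scaleN1r mulrBr addrC.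
  rewrite lam_lin //. have e := h y. simpl in e. rewrite e. by rewrite mulN1r addNr.
- by move=> g hg; have [t ht] := lamSurj HA fh fY hg; exists t.
- move=> a t b y.
  have -> : y * (a * t * psi b) = (y * a * t) * psi b by rewrite !mulrA.
  have -> : b * y * a * t = b * (y * a * t) by rewrite !mulrA.
  by rewrite [RHS](lam_psi HA fh fY Hpsi HpsiY).
Qed.

Lemma rels_triv (B : algType rat) (Z : nat -> B) k : (k <= 1)%N -> nilCoxeter_rels k Z.
Proof. by move=> hk; split => *; lia. Qed.

Theorem mainTheorem3 (n : nat) (A : algType rat) (Y : nat -> A)
  (HA : is_nilCoxeter n Y)
  (psi : A -> A) (Hpsi : is_alg_hom psi)
  (HpsiY : forall i, (1 <= i < n)%N -> psi (Y i) = Y (n - i)%N) :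
  exists Phi : A -> A -> rat,
    [/\ (* Phi t is an element of A^* = Hom_Q(A, Q) *)
        (forall t, is_Qlinear_functional (Phi t)),
        (* Phi is Q-linear *)
        (forall (c : rat) (t s y : A), Phi (c *: t + s) y = c * Phi t y + Phi s y),
        (* Phi is injective *)
        (forall t s, Phi t =1 Phi s -> t = s),
        (* Phi is surjective onto A^* *)
        (forall f : A -> rat, is_Qlinear_functional f -> exists t, Phi t =1 f)
      & (* bimodule map A^psi -> A^*: Phi (a . t . b) = a . Phi t . b, where
           a . t . b = a t psi(b) in A^psi and (a f b)(y) = f (b y a) in A^* *)
        (forall a t b y : A, Phi (a * t * psi b) y = Phi t (b * y * a))].
Proof.
case: n HA HpsiY => [|m] HA HpsiY; last first.
  by apply: (main_succ HA Hpsi HpsiY).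
apply: (main_succ (m := 0) (Y := Y)) Hpsi _; last by move=> i; lia.
split; first exact: rels_triv.
move=> B Z _; have [f [fh _ fu]] := HA.2 B Z (rels_triv Z (leq0n 1)).
exists f; split => // [i|g hg _]; first by lia.
by apply: fu => // i; lia.
Qed.
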